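(* Let $q>1$, $\alpha>0$, $0<\theta<1$, $1\le r<\infty$, and let $K_d$ be a nonnegative decreasing function on $(0,1)$. Then, with constants depending only on $q,\alpha,\theta,r$, $$\int_0^1\Bigl[t^{1-\theta}(1-\log t)^{\frac{\alpha(1-\theta)}{q}}\sup_{t<s<1}(1-\log s)^{-\frac{\alpha}{q}}K_d(s)\Bigr]^r\frac{dt}{t}\ \approx\ \int_0^1\Bigl[t^{1-\theta}(1-\log t)^{-\frac{\alpha\theta}{q}}K_d(t)\Bigr]^r\frac{dt}{t}.$$
   Context: $\log$ is the natural logarithm. $A\approx B$ means $c^{-1}B\le A\le cB$ with $c$ independent of $K_d$. *)

(* Defs.v *)
From Stdlib Require Import Reals ClassicalEpsilon.
Open Scope R_scope.

(* Real power x^y for x >= 0, extended by 0^y = 0 (y > 0 in all uses). *)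
Definition rpow (x y : R) : R :=
  if Rlt_dec 0 x then Rpower x y else 0.

Definition Rsup (E : R -> Prop) : R :=
  epsilon (inhabits 0) (fun m => is_lub E m).

Definition Ksup (q alpha : R) (K : R -> R) (t : R) : R :=
  Rsup (fun y => exists s, t < s < 1 /\
          y = rpow (1 - ln s) (- (alpha / q)) * K s).

Definition lhs_integrand (q alpha theta r : R) (K : R -> R) (t : R) : R :=
  rpow (rpow t (1 - theta) * rpow (1 - ln t) (alpha * (1 - theta) / q)
        * Ksup q alpha K t) r / t.

Definition rhs_integrand (q alpha theta r : R) (K : R -> R) (t : R) : R :=
  rpow (rpow t (1 - theta) * rpow (1 - ln t) (- (alpha * theta / q)) * K t) r / t.

(* "\int_0^1 f <= M" for a nonnegative f, as an improper integral in [0,+oo]: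
   every Riemann integral over a compact [a,b] in (0,1) is at most M. *)
Definition int01_le (f : R -> R) (M : R) : Prop :=
  forall (a b : R) (pr : Riemann_integrable f a b),
    0 < a -> a <= b -> b < 1 -> RiemannInt pr <= M.

(* Main.v *)
Require Import Defs.
From Stdlib Require Import Reals.
From Stdlib Require Import Lra Lia Psatz ClassicalEpsilon RList Ranalysis1 RiemannInt_SF RiemannInt.
Open Scope R_scope.

Lemma exp_le_mono x y : x <= y -> exp x <= exp y.
Proof. intros [H|H]; [left; apply exp_increasing; exact H| subst; lra]. Qed.

Lemma ln_le_mono x y : 0 < x -> x <= y -> ln x <= ln y.
Proof. intros Hx [H|H]; [left; apply ln_increasing; lra| subst; lra]. Qed.

Lemma Rpower_pos x y : 0 < Rpower x y.
Proof. unfold Rpower; apply exp_pos. Qed.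

Lemma rpow_pos_eq x y : 0 < x -> rpow x y = Rpower x y.
Proof. intros H; unfold rpow; destruct (Rlt_dec 0 x); [reflexivity|lra]. Qed.

Lemma rpow_nonneg x y : 0 <= rpow x y.
Proof. unfold rpow; destruct (Rlt_dec 0 x); [left; apply Rpower_pos|lra]. Qed.

Lemma rpow_zero y : rpow 0 y = 0.
Proof. unfold rpow; destruct (Rlt_dec 0 0); [lra|reflexivity]. Qed.

Lemma rpow_mul x y z : 0 < x -> 0 <= y -> rpow (x * y) z = Rpower x z * rpow y z.
Proof.
  intros Hx [Hy|Hy].
  - rewrite !rpow_pos_eq; try nra. rewrite Rpower_mult_distr; auto.
  - subst. rewrite Rmult_0_r, rpow_zero. ring.
Qed.

Lemma Rpower_base_le x y z : 0 < x -> x <= y -> 0 <= z -> Rpower x z <= Rpower y z.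
Proof. intros; apply Rle_Rpower_l; auto; lra. Qed.

Lemma Rpower_base_ge x y z : 0 < x -> x <= y -> z <= 0 -> Rpower y z <= Rpower x z.
Proof.
  intros Hx Hxy Hz; unfold Rpower; apply exp_le_mono.
  assert (ln x <= ln y) by (apply ln_le_mono; auto). nra.
Qed.

Lemma rpow_base_le x y z : 0 <= x -> x <= y -> 0 <= z -> rpow x z <= rpow y z.
Proof.
  intros [Hx|Hx] Hxy Hz.
  - rewrite !rpow_pos_eq; try lra. apply Rpower_base_le; auto.
  - subst; rewrite rpow_zero; apply rpow_nonneg.
Qed.

Lemma Rpower_exp y z : Rpower (exp y) z = exp (z * y).
Proof. unfold Rpower; rewrite ln_exp; reflexivity. Qed.

Lemma Rpower_inv1 t : 0 < t -> / t = Rpower t (-1).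
Proof. intros H; replace (-1) with (- (1)) by ring; rewrite Rpower_Ropp, Rpower_1; auto. Qed.

Lemma Rsup_lub (E : R -> Prop) : bound E -> (exists x, E x) -> is_lub E (Rsup E).
Proof.
  intros Hb He. unfold Rsup. apply epsilon_spec.
  destruct (completeness E Hb He) as [m Hm]. exists m; exact Hm.
Qed.

Fixpoint sumk (f : nat -> R) (k : nat) : R :=
  match k with O => 0 | S k' => sumk f k' + f k' end.

Lemma sumk_ext f g k : (forall i, (i < k)%nat -> f i = g i) -> sumk f k = sumk g k.
Proof.
  induction k; intros H; simpl; auto.
  rewrite IHk, H; auto; intros; apply H; lia.
Qed.

Lemma sumk_scal c f k : sumk (fun i => c * f i) k = c * sumk f k.
Proof. induction k; simpl; [ring| rewrite IHk; ring]. Qed.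

Lemma sumk_minus f g k : sumk (fun i => f i - g i) k = sumk f k - sumk g k.
Proof. induction k; simpl; [ring| rewrite IHk; ring]. Qed.

Lemma sumk_nonneg f k : (forall i, 0 <= f i) -> 0 <= sumk f k.
Proof. intros H; induction k; simpl; [lra| specialize (H k); lra]. Qed.

Lemma sf_piece (f : R -> R) (x y c : R) :
  x <= y -> (forall t, x < t < y -> f t = c) -> IsStepFun f x y.
Proof.
  intros Hxy Hc. exists (cons x (cons y nil)). exists (cons c nil).
  unfold adapted_couple; repeat split.
  - unfold ordered_Rlist; intros; simpl in H; inversion H;
      [ simpl; assumption | elim (Nat.nle_succ_0 _ H1) ].
  - simpl; unfold Rmin; destruct (Rle_dec x y); [reflexivity|lra].
  - simpl; unfold Rmax; destruct (Rle_dec x y); [reflexivity|lra].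
  - unfold constant_D_eq, open_interval; intros; simpl in H;
      destruct i; [apply Hc; exact H0 | lia].
Qed.

Lemma sf_const_val (x y c : R) (g : StepFun x y) :
  x <= y -> (forall t, x < t < y -> g t = c) -> RiemannInt_SF g = c * (y - x).
Proof.
  intros Hxy Hc. rewrite <- (StepFun_P18 x y c).
  apply Rle_antisym; apply StepFun_P37; auto; intros t Ht; simpl; unfold fct_cte;
  rewrite Hc; auto; lra.
Qed.

Fixpoint idx (a h : R) (n : nat) (t : R) : nat :=
  match n with
  | O => O
  | S n' => (idx a h n' t + (if Rle_dec (a + INR (S n') * h) t then 1 else 0))%nat
  end.

Lemma idx_full a h n t : 0 < h -> a + INR n * h <= t -> idx a h n t = n.
Proof.
  intros Hh; induction n; intros Ht; [reflexivity|].
  change (idx a h (S n) t) with (idx a h n t + (if Rle_dec (a + INR (S n) * h) t then 1 else 0))%nat.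
  rewrite IHn.
  - destruct (Rle_dec (a + INR (S n) * h) t); [lia| contradiction].
  - rewrite S_INR in Ht. nra.
Qed.

Lemma idx_spec a h n t : 0 < h -> a <= t -> t <= a + INR n * h ->
  (idx a h n t <= n)%nat /\ a + INR (idx a h n t) * h <= t /\
  ((idx a h n t < n)%nat -> t < a + INR (S (idx a h n t)) * h).
Proof.
  intros Hh Hat. induction n; intros Ht.
  - simpl. repeat split; [lia| lra| lia].
  - change (idx a h (S n) t) with (idx a h n t + (if Rle_dec (a + INR (S n) * h) t then 1 else 0))%nat.
    destruct (Rle_dec (a + INR (S n) * h) t) as [Hle|Hlt].
    + rewrite idx_full; auto.
      * replace (n + 1)%nat with (S n) by lia. repeat split; auto; lia.
      * rewrite S_INR in Hle. nra.
    + rewrite Nat.add_0_r.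
      destruct (Rle_dec t (a + INR n * h)) as [Hn|Hn].
      * destruct (IHn Hn) as [H1 [H2 H3]]. repeat split; auto.
        intros Hk. destruct (Nat.eq_dec (idx a h n t) n) as [E|E].
        -- rewrite E. lra.
        -- apply H3; lia.
      * rewrite idx_full; [|auto|lra]. repeat split; auto; lra.
Qed.

Lemma idx_open a h N k t : 0 < h -> (k < N)%nat ->
  a + INR k * h < t < a + INR (S k) * h -> idx a h N t = k.
Proof.
  intros Hh HkN Ht.
  assert (Ha : a <= t). { assert (0 <= INR k) by apply pos_INR. nra. }
  assert (Hb : t <= a + INR N * h).
  { assert (INR (S k) <= INR N) by (apply le_INR; lia). nra. }
  destruct (idx_spec a h N t Hh Ha Hb) as [H1 [H2 H3]].
  set (j := idx a h N t) in *.
  assert (Hj1 : (j <= k)%nat).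
  { assert (INR j < INR (S k)) by nra. apply INR_lt in H. lia. }
  destruct (Nat.eq_dec j N) as [E|E].
  - lia.
  - assert (t < a + INR (S j) * h) by (apply H3; lia).
    assert (INR k < INR (S j)) by nra. apply INR_lt in H0. lia.
Qed.

Lemma stepfun_idx_aux a h N (v : nat -> R) : 0 < h ->
  forall k, (k <= N)%nat ->
  { pr : IsStepFun (fun t => v (idx a h N t)) a (a + INR k * h) |
    RiemannInt_SF (mkStepFun pr) = sumk (fun i => v i * h) k }.
Proof.
  intros Hh. induction k; intros Hk.
  - simpl. replace (a + 0 * h) with a by ring.
    assert (Hc : forall t, a < t < a -> v (idx a h N t) = 0) by (intros; lra).
    exists (sf_piece (fun t => v (idx a h N t)) a a 0 (Rle_refl a) Hc).
    rewrite (sf_const_val a a 0); [ring|lra|intros; lra].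
  - destruct (IHk ltac:(lia)) as [pr1 E1].
    assert (Hp : a + INR k * h <= a + INR (S k) * h) by (rewrite S_INR; nra).
    assert (pr2 : IsStepFun (fun t => v (idx a h N t)) (a + INR k * h) (a + INR (S k) * h)).
    { apply (sf_piece _ _ _ (v k) Hp). intros t Ht. rewrite (idx_open a h N k t); auto; lia. }
    exists (StepFun_P46 pr1 pr2).
    rewrite <- (StepFun_P43 pr1 pr2 (StepFun_P46 pr1 pr2)).
    rewrite E1. simpl sumk. f_equal.
    rewrite (sf_const_val _ _ (v k)); auto.
    + rewrite S_INR; ring.
    + intros t Ht. simpl. rewrite (idx_open a h N k t); auto; lia.
Qed.

Lemma darboux (f : R -> R) (a b : R) : a <= b ->
  (forall eps, 0 < eps -> exists g1 g2 : StepFun a b,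
      (forall t, a <= t <= b -> g1 t <= f t <= g2 t) /\
      RiemannInt_SF g2 - RiemannInt_SF g1 < eps) ->
  Riemann_integrable f a b.
Proof.
  intros Hab H [e He].
  destruct (constructive_indefinite_description _ (H e He)) as [g1 Hg1].
  destruct (constructive_indefinite_description _ Hg1) as [g2 [Hg Hs]].
  exists g1. exists (mkStepFun (StepFun_P28 (-1) g2 g1)). split.
  - intros t Ht. rewrite Rmin_left, Rmax_right in Ht by lra. simpl.
    destruct (Hg t Ht). rewrite Rabs_right by lra. lra.
  - rewrite StepFun_P30. simpl.
    assert (RiemannInt_SF g1 <= RiemannInt_SF g2).
    { apply StepFun_P37; auto. intros t Ht. destruct (Hg t); lra. }
    rewrite Rabs_right; lra.
Qed.

Lemma incdec (i d : R -> R) (a b : R) : a <= b ->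
  (forall s t, a <= s -> s <= t -> t <= b -> 0 <= i s /\ i s <= i t) ->
  (forall s t, a <= s -> s <= t -> t <= b -> 0 <= d t /\ d t <= d s) ->
  Riemann_integrable (fun t => i t * d t) a b.
Proof.
  intros Hab Hi Hd. destruct (Req_EM_T a b) as [E|Hne].
  { subst; apply RiemannInt_P7. }
  assert (Hlt : a < b) by lra.
  apply darboux; auto. intros eps Heps.
  set (C0 := (i b - i a) * d a + i b * (d a - d b)).
  assert (HC0 : 0 <= C0).
  { unfold C0. destruct (Hi a b); try lra. destruct (Hd a b); try lra. nra. }
  destruct (INR_unbounded ((b - a) * C0 / eps + 1)) as [N HN].
  assert (HN0 : 0 < INR N).
  { assert (0 <= (b - a) * C0 / eps). { apply Rmult_le_pos; [nra| left; apply Rinv_0_lt_compat; lra]. } lra. }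
  set (h := (b - a) / INR N).
  assert (Hh : 0 < h). { unfold h; apply Rdiv_lt_0_compat; lra. }
  assert (Hb : b = a + INR N * h). { unfold h; field; lra. }
  set (xc := fun k => a + INR (Nat.min k N) * h).
  assert (Hxc : forall k, a <= xc k <= b).
  { intros k; unfold xc. assert (0 <= INR (Nat.min k N)) by apply pos_INR.
    assert (INR (Nat.min k N) <= INR N) by (apply le_INR; lia). nra. }
  assert (Hxcm : forall k k', (k <= k')%nat -> xc k <= xc k').
  { intros k k' Hk; unfold xc. assert (INR (Nat.min k N) <= INR (Nat.min k' N)) by (apply le_INR; lia). nra. }
  set (v1 := fun k => i (xc k) * d (xc (S k))).
  set (v2 := fun k => i (xc (S k)) * d (xc k)).
  destruct (stepfun_idx_aux a h N v1 Hh N (le_n N)) as [pr1 E1].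
  destruct (stepfun_idx_aux a h N v2 Hh N (le_n N)) as [pr2 E2].
  revert pr1 E1 pr2 E2. rewrite <- Hb. intros pr1 E1 pr2 E2.
  exists (mkStepFun pr1), (mkStepFun pr2). split.
  - intros t Ht. simpl.
    destruct (idx_spec a h N t Hh (proj1 Ht) ltac:(lra)) as [H1 [H2 H3]].
    set (k := idx a h N t) in *.
    destruct (Nat.eq_dec k N) as [Ek|Ek].
    + assert (Et : t = b) by (rewrite Ek in H2; lra).
      assert (xc k = b) by (unfold xc; rewrite Nat.min_r by lia; lra).
      assert (xc (S k) = b) by (unfold xc; rewrite Nat.min_r by lia; lra).
      unfold v1, v2. rewrite H, H0, Et. lra.
    + assert (Hk : (k < N)%nat) by lia. specialize (H3 Hk).
      assert (E0 : xc k = a + INR k * h) by (unfold xc; rewrite Nat.min_l by lia; reflexivity).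
      assert (E1' : xc (S k) = a + INR (S k) * h) by (unfold xc; rewrite Nat.min_l by lia; reflexivity).
      destruct (Hxc k), (Hxc (S k)).
      destruct (Hi (xc k) t) as [Hi1 Hi2]; try lra.
      destruct (Hi t (xc (S k))) as [Hi3 Hi4]; try lra.
      destruct (Hd (xc k) t) as [Hd1 Hd2]; try lra.
      destruct (Hd t (xc (S k))) as [Hd3 Hd4]; try lra.
      unfold v1, v2. split; apply Rmult_le_compat; lra.
  - simpl. rewrite E1, E2.
    assert (Htel : forall n, (n <= N)%nat ->
      sumk (fun k => v2 k - v1 k) n <= (i (xc n) - i a) * d a + i (xc n) * (d a - d (xc n))).
    { induction n; intros Hn.
      - simpl. assert (xc 0%nat = a) by (unfold xc; simpl; lra). rewrite H.
        destruct (Hi a a); try lra; nra.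
      - simpl sumk. specialize (IHn ltac:(lia)).
        assert (xc 0%nat = a) by (unfold xc; simpl; lra).
        destruct (Hxc n), (Hxc (S n)).
        assert (Hm : xc n <= xc (S n)) by (apply Hxcm; lia).
        assert (Hm0 : xc 0%nat <= xc n) by (apply Hxcm; lia).
        destruct (Hi (xc n) (xc (S n))); try lra.
        destruct (Hd (xc n) (xc (S n))); try lra.
        destruct (Hd a (xc n)); try lra.
        destruct (Hi a (xc n)); try lra.
        unfold v1, v2 in *.
        assert (0 <= (i (xc (S n)) - i (xc n)) * (2 * d a - d (xc n) - d (xc (S n)))) by nra.
        nra. }
    assert (Hs : sumk (fun k => v2 k * h) N - sumk (fun k => v1 k * h) N
                 = h * sumk (fun k => v2 k - v1 k) N).
    { rewrite <- sumk_minus, <- sumk_scal. apply sumk_ext; intros; ring. }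
    rewrite Hs. specialize (Htel N (le_n N)).
    assert (xc N = b) by (unfold xc; rewrite Nat.min_id; lra).
    rewrite H in Htel. fold C0 in Htel.
    apply Rle_lt_trans with (h * C0). { apply Rmult_le_compat_l; lra. }
    unfold h. apply (Rmult_lt_reg_r (INR N)); auto.
    replace ((b - a) / INR N * C0 * INR N) with ((b - a) * C0) by (field; lra).
    apply (Rmult_lt_reg_r (/ eps)). { apply Rinv_0_lt_compat; lra. }
    replace (eps * INR N * / eps) with (INR N) by (field; lra). unfold Rdiv in HN. lra.
Qed.

Lemma P_gt1 t : 0 < t < 1 -> 1 < 1 - ln t.
Proof. intros [H0 H1]. assert (ln t < ln 1) by (apply ln_increasing; lra). rewrite ln_1 in H. lra. Qed.

Lemma P_anti s t : 0 < s -> s <= t -> 1 - ln t <= 1 - ln s.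
Proof. intros. assert (ln s <= ln t) by (apply ln_le_mono; lra). lra. Qed.

Lemma Rpower_le_1 x e : 1 <= x -> e <= 0 -> Rpower x e <= 1.
Proof.
  intros Hx He. unfold Rpower. rewrite <- exp_0. apply exp_le_mono.
  assert (0 <= ln x) by (rewrite <- ln_1; apply ln_le_mono; lra). nra.
Qed.

Lemma deco2 theta r e t Y : 0 < t < 1 -> 0 <= Y ->
  rpow (rpow t (1 - theta) * rpow (1 - ln t) e * Y) r / t
  = Rpower t ((1 - theta) * r) * Rpower (1 - ln t) (e * r) * rpow Y r / t.
Proof.
  intros Ht HY. assert (HP := P_gt1 t Ht).
  rewrite (rpow_pos_eq t) by lra. rewrite (rpow_pos_eq (1 - ln t)) by lra.
  rewrite rpow_mul; auto.
  - rewrite <- Rpower_mult_distr by apply Rpower_pos.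
    rewrite !Rpower_mult. reflexivity.
  - apply Rmult_lt_0_compat; apply Rpower_pos.
Qed.

Lemma deco theta r e t Y : 0 < t < 1 -> 0 <= Y ->
  rpow (rpow t (1 - theta) * rpow (1 - ln t) e * Y) r / t
  = Rpower t ((1 - theta) * r - 1) * Rpower (1 - ln t) (e * r) * rpow Y r.
Proof.
  intros Ht HY. rewrite deco2; auto. unfold Rdiv. rewrite (Rpower_inv1 t) by lra.
  replace ((1 - theta) * r - 1) with ((1 - theta) * r + -1) by ring. rewrite Rpower_plus. ring.
Qed.

Lemma integ_gen E F (Z : R -> R) a b : 0 < a -> a <= b -> b < 1 ->
  (forall s t, a <= s -> s <= t -> t <= b -> 0 <= Z t /\ Z t <= Z s) ->
  Riemann_integrable (fun t => Rpower t E * Rpower (1 - ln t) F * Z t) a b.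
Proof.
  intros Ha Hab Hb HZ.
  assert (HtE1 : 0 <= E -> forall s t, a <= s -> s <= t -> t <= b -> Rpower s E <= Rpower t E).
  { intros; apply Rpower_base_le; lra. }
  assert (HtE2 : E <= 0 -> forall s t, a <= s -> s <= t -> t <= b -> Rpower t E <= Rpower s E).
  { intros; apply Rpower_base_ge; lra. }
  assert (HP : forall s t, a <= s -> s <= t -> t <= b -> 0 < 1 - ln t /\ 1 - ln t <= 1 - ln s).
  { intros; split; [assert (H3 := P_gt1 t); lra| apply P_anti; lra]. }
  assert (HF1 : 0 <= F -> forall s t, a <= s -> s <= t -> t <= b -> Rpower (1 - ln t) F <= Rpower (1 - ln s) F).
  { intros; destruct (HP s t); auto; apply Rpower_base_le; lra. }
  assert (HF2 : F <= 0 -> forall s t, a <= s -> s <= t -> t <= b -> Rpower (1 - ln s) F <= Rpower (1 - ln t) F).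
  { intros; destruct (HP s t); auto; apply Rpower_base_ge; lra. }
  assert (Pp := Rpower_pos).
  destruct (Rle_dec 0 E) as [E1|E1]; destruct (Rle_dec 0 F) as [F1|F1].
  - apply Riemann_integrable_ext with (fun t => Rpower t E * (Rpower (1 - ln t) F * Z t)).
    { intros; ring. }
    apply incdec; auto.
    + intros s t Hs Hst Ht; split; [left; apply Pp| apply HtE1; auto].
    + intros s t Hs Hst Ht; destruct (HZ s t Hs Hst Ht).
      assert (H1 := HF1 F1 s t Hs Hst Ht). pose proof (Pp (1 - ln t) F). split; [nra|].
      apply Rmult_le_compat; auto; lra.
  - apply incdec; auto.
    + intros s t Hs Hst Ht; split; [left; apply Rmult_lt_0_compat; apply Pp|].
      apply Rmult_le_compat; try (left; apply Pp). apply HtE1; auto. apply HF2; auto; lra.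
  - apply Riemann_integrable_ext with (fun t => 1 * (Rpower t E * Rpower (1 - ln t) F * Z t)).
    { intros; ring. }
    apply incdec; auto.
    + intros; lra.
    + intros s t Hs Hst Ht; destruct (HZ s t Hs Hst Ht).
      assert (H1 := HtE2 ltac:(lra) s t Hs Hst Ht).
      assert (H2 := HF1 ltac:(lra) s t Hs Hst Ht).
      pose proof (Pp t E). pose proof (Pp (1 - ln t) F). split.
      * apply Rmult_le_pos; auto. apply Rmult_le_pos; lra.
      * apply Rmult_le_compat; auto.
        -- apply Rmult_le_pos; lra.
        -- apply Rmult_le_compat; lra.
  - apply Riemann_integrable_ext with (fun t => Rpower (1 - ln t) F * (Rpower t E * Z t)).
    { intros; ring. }
    apply incdec; auto.
    + intros s t Hs Hst Ht; split; [left; apply Pp| apply (HF2 ltac:(lra) s t); auto].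
    + intros s t Hs Hst Ht; destruct (HZ s t Hs Hst Ht).
      assert (H1 := HtE2 ltac:(lra) s t Hs Hst Ht). pose proof (Pp t E). split; [nra|].
      apply Rmult_le_compat; auto; lra.
Qed.

Definition KS (q alpha : R) (K : R -> R) (t : R) : R -> Prop :=
  fun y => exists s, t < s < 1 /\ y = rpow (1 - ln s) (- (alpha / q)) * K s.

Lemma w_bounds q alpha s : 0 <= alpha / q -> 0 < s < 1 ->
  0 < rpow (1 - ln s) (- (alpha / q)) <= 1.
Proof.
  intros Hb Hs. assert (H := P_gt1 s Hs). rewrite rpow_pos_eq by lra. split.
  - apply Rpower_pos.
  - apply Rpower_le_1; lra.
Qed.


Lemma Ksup_lub q alpha K t : 0 <= alpha / q -> 0 < t < 1 ->
  (forall t, 0 < t < 1 -> 0 <= K t) ->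
  (forall s t, 0 < s -> s <= t -> t < 1 -> K t <= K s) ->
  is_lub (KS q alpha K t) (Ksup q alpha K t).
Proof.
  intros Hb Ht HK0 HKd. unfold Ksup. apply Rsup_lub.
  - exists (K t). intros y [s [Hs Hy]]. subst y.
    destruct (w_bounds q alpha s Hb ltac:(lra)).
    assert (K s <= K t) by (apply HKd; lra). assert (0 <= K s) by (apply HK0; lra). nra.
  - exists (rpow (1 - ln ((t + 1) / 2)) (- (alpha / q)) * K ((t + 1) / 2)).
    exists ((t + 1) / 2). split; [lra|reflexivity].
Qed.

Lemma Ksup_ge q alpha K t s : 0 <= alpha / q -> 0 < t -> t < s < 1 ->
  (forall t, 0 < t < 1 -> 0 <= K t) ->
  (forall s t, 0 < s -> s <= t -> t < 1 -> K t <= K s) ->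
  rpow (1 - ln s) (- (alpha / q)) * K s <= Ksup q alpha K t.
Proof.
  intros Hb Ht Hs HK0 HKd. destruct (Ksup_lub q alpha K t Hb ltac:(lra) HK0 HKd) as [H1 H2].
  apply H1. exists s; split; auto.
Qed.

Lemma Ksup_le q alpha K t B : 0 <= alpha / q -> 0 < t < 1 ->
  (forall t, 0 < t < 1 -> 0 <= K t) ->
  (forall s t, 0 < s -> s <= t -> t < 1 -> K t <= K s) ->
  (forall s, t < s < 1 -> rpow (1 - ln s) (- (alpha / q)) * K s <= B) ->
  Ksup q alpha K t <= B.
Proof.
  intros Hb Ht HK0 HKd HB. destruct (Ksup_lub q alpha K t Hb Ht HK0 HKd) as [H1 H2].
  apply H2. intros y [s [Hs Hy]]. subst; auto.
Qed.

Lemma Ksup_nonneg q alpha K t : 0 <= alpha / q -> 0 < t < 1 ->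
  (forall t, 0 < t < 1 -> 0 <= K t) ->
  (forall s t, 0 < s -> s <= t -> t < 1 -> K t <= K s) ->
  0 <= Ksup q alpha K t.
Proof.
  intros Hb Ht HK0 HKd. set (s := (t + 1) / 2).
  apply Rle_trans with (rpow (1 - ln s) (- (alpha / q)) * K s).
  - destruct (w_bounds q alpha s Hb ltac:(unfold s; lra)). assert (0 <= K s) by (apply HK0; unfold s; lra). nra.
  - apply Ksup_ge; auto; unfold s; lra.
Qed.

Lemma Ksup_anti q alpha K t t' : 0 <= alpha / q -> 0 < t -> t <= t' -> t' < 1 ->
  (forall t, 0 < t < 1 -> 0 <= K t) ->
  (forall s t, 0 < s -> s <= t -> t < 1 -> K t <= K s) ->
  Ksup q alpha K t' <= Ksup q alpha K t.
Proof.
  intros Hb Ht Htt Ht' HK0 HKd. apply Ksup_le; auto; try lra.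
  intros s Hs. apply Ksup_ge; auto; lra.
Qed.

Lemma rhs_integ q alpha theta r K a b : 0 < a -> a <= b -> b < 1 -> 0 <= r ->
  (forall t, 0 < t < 1 -> 0 <= K t) ->
  (forall s t, 0 < s -> s <= t -> t < 1 -> K t <= K s) ->
  Riemann_integrable (rhs_integrand q alpha theta r K) a b.
Proof.
  intros Ha Hab Hb Hr HK0 HKd.
  apply Riemann_integrable_ext with
    (fun t => Rpower t ((1 - theta) * r - 1) * Rpower (1 - ln t) (- (alpha * theta / q) * r) * rpow (K t) r).
  - intros x Hx. rewrite Rmin_left, Rmax_right in Hx by lra. unfold rhs_integrand.
    rewrite deco; auto; [lra| apply HK0; lra].
  - apply integ_gen; auto. intros s t Hs Hst Ht. split; [apply rpow_nonneg|].
    apply rpow_base_le; auto; [apply HK0; lra| apply HKd; lra].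
Qed.

Lemma lhs_integ q alpha theta r K a b : 0 <= alpha / q -> 0 < a -> a <= b -> b < 1 -> 0 <= r ->
  (forall t, 0 < t < 1 -> 0 <= K t) ->
  (forall s t, 0 < s -> s <= t -> t < 1 -> K t <= K s) ->
  Riemann_integrable (lhs_integrand q alpha theta r K) a b.
Proof.
  intros Hbq Ha Hab Hb Hr HK0 HKd.
  apply Riemann_integrable_ext with
    (fun t => Rpower t ((1 - theta) * r - 1) * Rpower (1 - ln t) (alpha * (1 - theta) / q * r) * rpow (Ksup q alpha K t) r).
  - intros x Hx. rewrite Rmin_left, Rmax_right in Hx by lra. unfold lhs_integrand.
    rewrite deco; auto; [lra| apply Ksup_nonneg; auto; lra].
  - apply integ_gen; auto. intros s t Hs Hst Ht. split; [apply rpow_nonneg|].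
    apply rpow_base_le; auto; [apply Ksup_nonneg; auto; lra| apply Ksup_anti; auto; lra].
Qed.

Lemma int_ub (f : R -> R) x y (pr : Riemann_integrable f x y) M0 : x <= y ->
  (forall t, x < t < y -> f t <= M0) -> RiemannInt pr <= M0 * (y - x).
Proof.
  intros Hxy H. rewrite <- (RiemannInt_P15 (RiemannInt_P14 x y M0)).
  apply RiemannInt_P19; auto.
Qed.

Lemma int_lb (f : R -> R) x y (pr : Riemann_integrable f x y) m0 : x <= y ->
  (forall t, x < t < y -> m0 <= f t) -> m0 * (y - x) <= RiemannInt pr.
Proof.
  intros Hxy H. rewrite <- (RiemannInt_P15 (RiemannInt_P14 x y m0)).
  apply RiemannInt_P19; auto.
Qed.

Lemma dir2_pt q alpha theta r K t : 1 < q -> 0 < alpha -> 0 < theta < 1 -> 1 <= r ->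
  (forall t, 0 < t < 1 -> 0 <= K t) ->
  (forall s t, 0 < s -> s <= t -> t < 1 -> K t <= K s) ->
  0 < t < 1 ->
  Rpower (/ 2) ((1 - theta) * r - 1) * Rpower (1 + ln 2) (- (alpha * theta / q) * r)
    * rhs_integrand q alpha theta r K t <= lhs_integrand q alpha theta r K (/ 2 * t).
Proof.
  intros Hq Ha Hth Hr HK0 HKd Ht.
  assert (Hb : 0 <= alpha / q) by (apply Rlt_le, Rdiv_lt_0_compat; lra).
  set (u := / 2 * t). assert (Hu : 0 < u < 1) by (unfold u; lra).
  set (s := 3 / 4 * t). assert (Hs : u < s < 1) by (unfold u, s; lra).
  unfold rhs_integrand, lhs_integrand.
  rewrite (deco theta r _ t (K t)) by (auto; apply HK0; auto).
  rewrite (deco theta r _ u) by (auto; apply Ksup_nonneg; auto).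
  set (E := (1 - theta) * r - 1). set (FR := - (alpha * theta / q) * r).
  set (FL := alpha * (1 - theta) / q * r).
  assert (HPt := P_gt1 t Ht). assert (HPu := P_gt1 u Hu). assert (HPs := P_gt1 s ltac:(lra)).
  assert (Hw : rpow (1 - ln u) (- (alpha / q)) * K t <= Ksup q alpha K u).
  { apply Rle_trans with (rpow (1 - ln s) (- (alpha / q)) * K s).
    - rewrite !rpow_pos_eq by lra. apply Rmult_le_compat.
      + left; apply Rpower_pos.
      + apply HK0; auto.
      + apply Rpower_base_ge; try lra. apply P_anti; unfold s, u in *; lra.
      + apply HKd; unfold s, u in *; lra.
    - apply Ksup_ge; auto; lra. }
  assert (HK : Rpower (1 - ln u) (- (alpha / q) * r) * rpow (K t) r <= rpow (Ksup q alpha K u) r).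
  { rewrite <- Rpower_mult. rewrite <- rpow_mul; [| apply Rpower_pos| apply HK0; auto].
    apply rpow_base_le; try lra.
    - apply Rmult_le_pos; [left; apply Rpower_pos| apply HK0; auto].
    - rewrite <- (rpow_pos_eq (1 - ln u)) by lra. exact Hw. }
  assert (Hu1 : Rpower u E = Rpower (/ 2) E * Rpower t E).
  { unfold u. rewrite Rpower_mult_distr; auto; lra. }
  assert (HPu2 : 1 - ln u <= (1 + ln 2) * (1 - ln t)).
  { unfold u. rewrite ln_mult, ln_Rinv by lra. assert (H2 := ln_lt_2). nra. }
  assert (HFR : Rpower ((1 + ln 2) * (1 - ln t)) FR <= Rpower (1 - ln u) FR).
  { apply Rpower_base_ge; try lra. unfold FR.
    assert (0 <= alpha * theta / q) by (apply Rlt_le, Rdiv_lt_0_compat; nra). nra. }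
  rewrite <- Rpower_mult_distr in HFR by (assert (H2 := ln_lt_2); lra).
  assert (HF : FL = FR + alpha / q * r) by (unfold FL, FR; field; lra).
  rewrite HF, Rpower_plus, Hu1.
  pose proof (Rpower_pos (/2) E). pose proof (Rpower_pos t E). pose proof (Rpower_pos (1 + ln 2) FR).
  pose proof (Rpower_pos (1 - ln t) FR). pose proof (Rpower_pos (1 - ln u) FR).
  pose proof (Rpower_pos (1 - ln u) (alpha / q * r)).
  pose proof (rpow_nonneg (K t) r).
  replace (- (alpha / q) * r) with (- (alpha / q * r)) in HK by ring.
  rewrite Rpower_Ropp in HK.
  assert (HK' : rpow (K t) r <= Rpower (1 - ln u) (alpha / q * r) * rpow (Ksup q alpha K u) r).
  { apply (Rmult_le_reg_l (/ Rpower (1 - ln u) (alpha / q * r))).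
    - apply Rinv_0_lt_compat; auto.
    - rewrite <- Rmult_assoc, Rinv_l by lra. lra. }
  apply Rle_trans with (Rpower (/ 2) E * Rpower t E * Rpower (1 - ln u) FR * rpow (K t) r).
  - assert (Rpower (1 + ln 2) FR * Rpower (1 - ln t) FR <= Rpower (1 - ln u) FR) by lra.
    assert (0 <= Rpower (/ 2) E * Rpower t E * rpow (K t) r) by (apply Rmult_le_pos; nra).
    nra.
  - assert (0 <= Rpower (/ 2) E * Rpower t E * Rpower (1 - ln u) FR) by (apply Rmult_le_pos; nra).
    nra.
Qed.

Definition xg N0 (k : nat) := exp (- N0 * INR k).
Definition Pg N0 (k : nat) := 1 + N0 * INR k.

Lemma xg_pos N0 k : 0 < xg N0 k.
Proof. apply exp_pos. Qed.

Lemma xg_0 N0 : xg N0 0 = 1.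
Proof. unfold xg; simpl; rewrite Rmult_0_r; apply exp_0. Qed.

Lemma xg_S N0 k : xg N0 (S k) = xg N0 k * exp (- N0).
Proof. unfold xg; rewrite <- exp_plus, S_INR; f_equal; ring. Qed.

Lemma xg_lt N0 k : 0 < N0 -> xg N0 (S k) < xg N0 k.
Proof.
  intros H; rewrite xg_S. assert (exp (- N0) < 1) by (rewrite <- exp_0; apply exp_increasing; lra).
  assert (H1 := xg_pos N0 k). nra.
Qed.

Lemma xg_le1 N0 k : 0 <= N0 -> xg N0 k <= 1.
Proof. intros; unfold xg; rewrite <- exp_0; apply exp_le_mono. assert (0 <= INR k) by apply pos_INR. nra. Qed.

Lemma xg_anti N0 j k : 0 <= N0 -> (j <= k)%nat -> xg N0 k <= xg N0 j.
Proof. intros; unfold xg; apply exp_le_mono. assert (INR j <= INR k) by (apply le_INR; lia). nra. Qed.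

Lemma P_xg N0 k : 1 - ln (xg N0 k) = Pg N0 k.
Proof. unfold xg, Pg; rewrite ln_exp; ring. Qed.

Lemma Pg_ge1 N0 k : 0 <= N0 -> 1 <= Pg N0 k.
Proof. unfold Pg; assert (0 <= INR k) by apply pos_INR; nra. Qed.

Lemma locate N0 : 0 < N0 -> forall k s, xg N0 (S k) <= s <= 1 ->
  exists j, (j <= k)%nat /\ xg N0 (S j) <= s <= xg N0 j.
Proof.
  intros HN. induction k; intros s Hs.
  - exists 0%nat; rewrite xg_0; split; [lia|lra].
  - destruct (Rle_dec (xg N0 (S k)) s).
    + destruct (IHk s ltac:(lra)) as [j [Hj Hj']]. exists j; split; [lia|auto].
    + exists (S k); split; [lia|lra].
Qed.

Definition Ag q alpha N0 (K : R -> R) (k : nat) := Rpower (Pg N0 k) (- (alpha / q)) * K (xg N0 (S k)).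
Definition ag q alpha r N0 K k := rpow (Ag q alpha N0 K k) r.
Definition Tg q alpha r N0 K k := sumk (ag q alpha r N0 K) (S k).
Fixpoint Amax q alpha N0 K (k : nat) : R :=
  match k with O => Ag q alpha N0 K 0 | S k' => Rmax (Amax q alpha N0 K k') (Ag q alpha N0 K (S k')) end.

Lemma Ag_nonneg q alpha N0 K k : 0 < N0 ->
  (forall t, 0 < t < 1 -> 0 <= K t) -> 0 <= Ag q alpha N0 K k.
Proof.
  intros HN HK0. unfold Ag. apply Rmult_le_pos; [left; apply Rpower_pos|].
  apply HK0. split; [apply xg_pos|]. apply Rlt_le_trans with (xg N0 k); [apply xg_lt; auto| apply xg_le1; lra].
Qed.

Lemma Amax_ge q alpha N0 K j k : (j <= k)%nat -> Ag q alpha N0 K j <= Amax q alpha N0 K k.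
Proof.
  induction k; intros H.
  - replace j with 0%nat by lia. simpl; lra.
  - simpl. destruct (Nat.eq_dec j (S k)) as [E|E].
    + subst. apply Rmax_r.
    + apply Rle_trans with (Amax q alpha N0 K k); [apply IHk; lia| apply Rmax_l].
Qed.

Lemma Amax_nonneg q alpha N0 K k : 0 < N0 ->
  (forall t, 0 < t < 1 -> 0 <= K t) -> 0 <= Amax q alpha N0 K k.
Proof. intros; apply Rle_trans with (Ag q alpha N0 K 0); [apply Ag_nonneg; auto| apply Amax_ge; lia]. Qed.

Lemma Tg_nonneg q alpha r N0 K k : 0 <= Tg q alpha r N0 K k.
Proof. unfold Tg; apply sumk_nonneg; intros; apply rpow_nonneg. Qed.

Lemma Amax_pow q alpha r N0 K k : 0 < N0 -> 0 <= r ->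
  (forall t, 0 < t < 1 -> 0 <= K t) ->
  rpow (Amax q alpha N0 K k) r <= Tg q alpha r N0 K k.
Proof.
  intros HN Hr HK0. induction k.
  - unfold Tg; simpl. unfold ag. lra.
  - simpl Amax. unfold Tg. change (sumk (ag q alpha r N0 K) (S (S k))) with
      (sumk (ag q alpha r N0 K) (S k) + ag q alpha r N0 K (S k)).
    fold (Tg q alpha r N0 K k).
    assert (H1 := rpow_nonneg (Ag q alpha N0 K (S k)) r).
    assert (H2 := Tg_nonneg q alpha r N0 K k).
    unfold Rmax; destruct (Rle_dec (Amax q alpha N0 K k) (Ag q alpha N0 K (S k))); unfold ag; lra.
Qed.

Lemma Ks_block q alpha N0 K k t : 0 < N0 -> 0 <= alpha / q -> 0 < t < 1 ->
  xg N0 (S k) <= t ->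
  (forall t, 0 < t < 1 -> 0 <= K t) ->
  (forall s t, 0 < s -> s <= t -> t < 1 -> K t <= K s) ->
  Ksup q alpha K t <= Amax q alpha N0 K k.
Proof.
  intros HN Hb Ht Hk HK0 HKd. apply Ksup_le; auto.
  intros s Hs. destruct (locate N0 HN k s ltac:(lra)) as [j [Hj [Hj1 Hj2]]].
  apply Rle_trans with (Ag q alpha N0 K j); [| apply Amax_ge; auto].
  unfold Ag. assert (Hxs := xg_pos N0 (S j)).
  assert (HPs := P_gt1 s ltac:(lra)).
  rewrite rpow_pos_eq by lra. apply Rmult_le_compat.
  - left; apply Rpower_pos.
  - apply HK0; lra.
  - rewrite <- P_xg. apply Rpower_base_ge.
    + rewrite P_xg; assert (H := Pg_ge1 N0 j); lra.
    + apply P_anti; lra.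
    + lra.
  - apply HKd; lra.
Qed.

Definition Dg q alpha theta r N0 k :=
  Rpower (xg N0 k) ((1 - theta) * r) * Rpower (Pg N0 (S k)) (alpha * (1 - theta) / q * r).

Lemma Dg_nonneg q alpha theta r N0 k : 0 <= Dg q alpha theta r N0 k.
Proof. unfold Dg; apply Rmult_le_pos; left; apply Rpower_pos. Qed.

Lemma lhs_block q alpha theta r N0 K k t : 0 < N0 -> 1 < q -> 0 < alpha -> 0 < theta < 1 -> 1 <= r ->
  0 < t < 1 -> xg N0 (S k) <= t <= xg N0 k ->
  (forall t, 0 < t < 1 -> 0 <= K t) ->
  (forall s t, 0 < s -> s <= t -> t < 1 -> K t <= K s) ->
  lhs_integrand q alpha theta r K t <= Dg q alpha theta r N0 k * Tg q alpha r N0 K k / xg N0 (S k).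
Proof.
  intros HN Hq Ha Hth Hr Ht Hk HK0 HKd.
  assert (Hb : 0 <= alpha / q) by (apply Rlt_le, Rdiv_lt_0_compat; lra).
  unfold lhs_integrand. rewrite deco2; auto; [| apply Ksup_nonneg; auto].
  assert (Hx := xg_pos N0 (S k)).
  assert (H1 : Rpower t ((1 - theta) * r) <= Rpower (xg N0 k) ((1 - theta) * r)).
  { apply Rpower_base_le; try lra. nra. }
  assert (H2 : Rpower (1 - ln t) (alpha * (1 - theta) / q * r) <= Rpower (Pg N0 (S k)) (alpha * (1 - theta) / q * r)).
  { rewrite <- P_xg. apply Rpower_base_le.
    - assert (H := P_gt1 t Ht); lra.
    - apply P_anti; lra.
    - apply Rmult_le_pos; [| lra]. unfold Rdiv. apply Rmult_le_pos; [nra| left; apply Rinv_0_lt_compat; lra]. }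
  assert (H3 : rpow (Ksup q alpha K t) r <= Tg q alpha r N0 K k).
  { apply Rle_trans with (rpow (Amax q alpha N0 K k) r); [| apply Amax_pow; auto; lra].
    apply rpow_base_le; try lra; [apply Ksup_nonneg; auto| apply Ks_block; auto; lra]. }
  assert (H4 : / t <= / xg N0 (S k)) by (apply Rinv_le_contravar; lra).
  unfold Dg, Rdiv.
  pose proof (Rpower_pos t ((1 - theta) * r)). pose proof (Rpower_pos (1 - ln t) (alpha * (1 - theta) / q * r)).
  pose proof (rpow_nonneg (Ksup q alpha K t) r). assert (0 < / t) by (apply Rinv_0_lt_compat; lra).
  repeat apply Rmult_le_compat; try lra; repeat apply Rmult_le_pos; lra.
Qed.

Lemma lhs_piece q alpha theta r N0 K k a b (pr : Riemann_integrable (lhs_integrand q alpha theta r K) a b) :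
  0 < N0 -> 1 < q -> 0 < alpha -> 0 < theta < 1 -> 1 <= r ->
  xg N0 (S k) <= a -> a <= b -> b <= xg N0 k -> b < 1 ->
  (forall t, 0 < t < 1 -> 0 <= K t) ->
  (forall s t, 0 < s -> s <= t -> t < 1 -> K t <= K s) ->
  RiemannInt pr <= exp N0 * (Dg q alpha theta r N0 k * Tg q alpha r N0 K k).
Proof.
  intros HN Hq Ha Hth Hr H1 H2 H3 H4 HK0 HKd.
  assert (Hx := xg_pos N0 (S k)).
  eapply Rle_trans; [apply int_ub; [exact H2|] |].
  - intros t Ht. apply lhs_block with (N0 := N0) (k := k); auto; lra.
  - assert (HD := Dg_nonneg q alpha theta r N0 k). assert (HT := Tg_nonneg q alpha r N0 K k).
    assert (E : exp N0 = xg N0 k / xg N0 (S k)).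
    { rewrite xg_S. rewrite <- (Rinv_involutive (exp N0)) by (apply Rgt_not_eq, exp_pos).
      rewrite <- exp_Ropp. field. split; apply Rgt_not_eq; [apply exp_pos| apply xg_pos]. }
    rewrite E. unfold Rdiv.
    assert (0 <= Dg q alpha theta r N0 k * Tg q alpha r N0 K k * / xg N0 (S k))
      by (apply Rmult_le_pos; [nra| left; apply Rinv_0_lt_compat; lra]).
    assert (b - a <= xg N0 k) by lra. nra.
Qed.

Lemma lhs_blocks q alpha theta r N0 K : 0 < N0 -> 1 < q -> 0 < alpha -> 0 < theta < 1 -> 1 <= r ->
  (forall t, 0 < t < 1 -> 0 <= K t) ->
  (forall s t, 0 < s -> s <= t -> t < 1 -> K t <= K s) ->
  forall n a b (pr : Riemann_integrable (lhs_integrand q alpha theta r K) a b),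
  xg N0 (S n) <= a -> a <= b -> b < 1 ->
  RiemannInt pr <= exp N0 * sumk (fun k => Dg q alpha theta r N0 k * Tg q alpha r N0 K k) (S n).
Proof.
  intros HN Hq Ha Hth Hr HK0 HKd.
  assert (Hpos : forall n, 0 <= sumk (fun k => Dg q alpha theta r N0 k * Tg q alpha r N0 K k) n).
  { intros; apply sumk_nonneg; intros; apply Rmult_le_pos; [apply Dg_nonneg| apply Tg_nonneg]. }
  assert (HE := exp_pos N0).
  induction n; intros a b pr H1 H2 H3.
  - simpl. rewrite Rplus_0_l. apply lhs_piece; auto. rewrite xg_0; lra.
  - change (sumk (fun k => Dg q alpha theta r N0 k * Tg q alpha r N0 K k) (S (S n))) with
      (sumk (fun k => Dg q alpha theta r N0 k * Tg q alpha r N0 K k) (S n)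
       + Dg q alpha theta r N0 (S n) * Tg q alpha r N0 K (S n)).
    assert (HDT := Rmult_le_pos _ _ (Dg_nonneg q alpha theta r N0 (S n)) (Tg_nonneg q alpha r N0 K (S n))).
    destruct (Rle_dec (xg N0 (S n)) a) as [Ha'|Ha'].
    + specialize (IHn a b pr Ha' H2 H3). nra.
    + destruct (Rle_dec b (xg N0 (S n))) as [Hb'|Hb'].
      * assert (HH := lhs_piece q alpha theta r N0 K (S n) a b pr HN Hq Ha Hth Hr H1 H2 Hb' H3 HK0 HKd).
        specialize (Hpos (S n)). nra.
      * set (c := xg N0 (S n)).
        assert (pr1 := RiemannInt_P22 pr (conj (Rlt_le _ _ (Rnot_le_lt _ _ Ha')) (Rlt_le _ _ (Rnot_le_lt _ _ Hb')))).
        assert (pr2 := RiemannInt_P23 pr (conj (Rlt_le _ _ (Rnot_le_lt _ _ Ha')) (Rlt_le _ _ (Rnot_le_lt _ _ Hb')))).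
        rewrite <- (RiemannInt_P26 pr1 pr2 pr).
        assert (HH := lhs_piece q alpha theta r N0 K (S n) a c pr1 HN Hq Ha Hth Hr H1 ltac:(unfold c; lra) ltac:(unfold c; lra) ltac:(unfold c in *; lra) HK0 HKd).
        specialize (IHn c b pr2 ltac:(unfold c; lra) ltac:(unfold c in *; lra) H3).
        rewrite Rmult_plus_distr_l, (Rplus_comm (exp N0 * _)). apply Rplus_le_compat; assumption.
Qed.

Lemma hardy (Dk ak : nat -> R) : (forall k, 0 <= Dk k) -> (forall k, 0 <= ak k) ->
  (forall k, 2 * Dk (S k) <= Dk k) -> forall n,
  sumk (fun k => Dk k * sumk ak (S k)) (S n) + Dk n * sumk ak (S n)
  <= 2 * sumk (fun k => Dk k * ak k) (S n).
Proof.
  intros HD Ha HR. induction n.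
  - simpl. lra.
  - change (sumk (fun k => Dk k * sumk ak (S k)) (S (S n))) with
      (sumk (fun k => Dk k * sumk ak (S k)) (S n) + Dk (S n) * sumk ak (S (S n))).
    change (sumk (fun k => Dk k * ak k) (S (S n))) with
      (sumk (fun k => Dk k * ak k) (S n) + Dk (S n) * ak (S n)).
    change (sumk ak (S (S n))) with (sumk ak (S n) + ak (S n)).
    assert (HT : 0 <= sumk ak (S n)) by (apply sumk_nonneg; auto).
    specialize (HR n). specialize (HD (S n)).
    assert (2 * Dk (S n) * sumk ak (S n) <= Dk n * sumk ak (S n)) by nra.
    nra.
Qed.

Lemma Dg_ratio q alpha theta r N0 k : 0 < N0 -> 0 < (1 - theta) * r -> 0 <= alpha * (1 - theta) / q * r ->
  (alpha * (1 - theta) / q * r + 1) * ln 2 <= (1 - theta) * r * N0 ->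
  2 * Dg q alpha theta r N0 (S k) <= Dg q alpha theta r N0 k.
Proof.
  intros HN Hc Hg HNc. unfold Dg, xg, Rpower.
  rewrite ln_exp, ln_exp. set (c := (1 - theta) * r) in *. set (g := alpha * (1 - theta) / q * r) in *.
  replace 2 with (exp (ln 2)) at 1 by (apply exp_ln; lra).
  rewrite <- !exp_plus. apply exp_le_mono.
  assert (H1 : 0 < Pg N0 (S k)) by (assert (H := Pg_ge1 N0 (S k) ltac:(lra)); lra).
  assert (H2 : Pg N0 (S (S k)) <= 2 * Pg N0 (S k)).
  { unfold Pg. rewrite !S_INR. assert (0 <= INR k) by apply pos_INR. nra. }
  assert (H3 : ln (Pg N0 (S (S k))) <= ln 2 + ln (Pg N0 (S k))).
  { rewrite <- ln_mult by lra. apply ln_le_mono; auto. assert (H := Pg_ge1 N0 (S (S k)) ltac:(lra)); lra. }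
  rewrite S_INR. assert (0 <= g * (ln 2 + ln (Pg N0 (S k)) - ln (Pg N0 (S (S k))))) by nra.
  nra.
Qed.

Definition C3 q alpha theta r N0 :=
  Rpower (1 + 2 * N0) (alpha / q * r) * exp (2 * ((1 - theta) * r) * N0) / (1 - exp (- N0)).

Lemma rhs_block q alpha theta r N0 K k
  (pr : Riemann_integrable (rhs_integrand q alpha theta r K) (xg N0 (S (S k))) (xg N0 (S k))) :
  0 < N0 -> 1 < q -> 0 < alpha -> 0 < theta < 1 -> 1 <= r ->
  (forall t, 0 < t < 1 -> 0 <= K t) ->
  (forall s t, 0 < s -> s <= t -> t < 1 -> K t <= K s) ->
  Dg q alpha theta r N0 k * ag q alpha r N0 K k <= C3 q alpha theta r N0 * RiemannInt pr.
Proof.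
  intros HN Hq Ha Hth Hr HK0 HKd.
  set (X := xg N0 (S k)). set (Y := xg N0 (S (S k))).
  assert (HX : 0 < X) by apply xg_pos. assert (HY : 0 < Y) by apply xg_pos.
  assert (HYX : Y < X) by apply xg_lt, HN.
  assert (HX1 : X < 1) by (apply Rlt_le_trans with (xg N0 k); [apply xg_lt; auto| apply xg_le1; lra]).
  assert (HKX : 0 <= K X) by (apply HK0; lra).
  set (c := (1 - theta) * r). set (FR := - (alpha * theta / q) * r).
  assert (Hc : 0 < c) by (unfold c; nra).
  assert (HFR : FR <= 0).
  { unfold FR. assert (0 <= alpha * theta / q) by (apply Rlt_le, Rdiv_lt_0_compat; nra). nra. }
  set (l := Rpower Y c * Rpower (Pg N0 (S (S k))) FR * rpow (K X) r / X).
  assert (Hl : l * (X - Y) <= RiemannInt pr).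
  { apply int_lb; [apply Rlt_le, xg_lt; lra|]. intros t Ht. change (Y < t < X) in Ht. unfold rhs_integrand.
    rewrite deco2; [| lra| apply HK0; lra]. fold c. unfold l.
    assert (HPt := P_gt1 t ltac:(lra)).
    assert (H1 : Rpower Y c <= Rpower t c) by (apply Rpower_base_le; lra).
    assert (H2 : Rpower (Pg N0 (S (S k))) FR <= Rpower (1 - ln t) FR).
    { replace (Pg N0 (S (S k))) with (1 - ln Y) by (unfold Y; apply P_xg). apply Rpower_base_ge; auto; [lra| apply P_anti; lra]. }
    assert (H3 : rpow (K X) r <= rpow (K t) r).
    { apply rpow_base_le; [exact HKX| apply HKd; lra| lra]. }
    assert (H4 : / X <= / t) by (apply Rinv_le_contravar; lra).
    fold FR.
    pose proof (Rpower_pos Y c). pose proof (Rpower_pos (Pg N0 (S (S k))) FR).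
    pose proof (rpow_nonneg (K X) r). assert (0 < / X) by (apply Rinv_0_lt_compat; lra).
    unfold Rdiv. repeat apply Rmult_le_compat; try lra; repeat apply Rmult_le_pos; lra. }
  assert (HC3 : 0 <= C3 q alpha theta r N0).
  { unfold C3. assert (exp (- N0) < 1) by (rewrite <- exp_0; apply exp_increasing; lra).
    apply Rlt_le, Rdiv_lt_0_compat; [apply Rmult_lt_0_compat; [apply Rpower_pos| apply exp_pos]| lra]. }
  apply Rle_trans with (C3 q alpha theta r N0 * (l * (X - Y))); [| apply Rmult_le_compat_l; auto].
  assert (HYe : Y = X * exp (- N0)) by (unfold Y, X; apply xg_S).
  assert (HXe : X = xg N0 k * exp (- N0)) by (unfold X; apply xg_S).
  assert (He1 : exp (- N0) < 1) by (rewrite <- exp_0; apply exp_increasing; lra).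
  assert (HeN := exp_pos (- N0)).
  assert (Hlx : l * (X - Y) = Rpower Y c * Rpower (Pg N0 (S (S k))) FR * rpow (K X) r * (1 - exp (- N0))).
  { unfold l. rewrite HYe. field. lra. }
  rewrite Hlx.
  assert (HRY : Rpower Y c = Rpower (xg N0 k) c * exp (- (2 * c * N0))).
  { rewrite HYe, HXe. rewrite <- !Rpower_mult_distr; try (apply Rmult_lt_0_compat); try apply exp_pos; try apply xg_pos.
    rewrite !Rpower_exp. rewrite Rmult_assoc, <- exp_plus. f_equal. f_equal. ring. }
  rewrite HRY.
  unfold ag, Ag. rewrite rpow_mul; [| apply Rpower_pos| exact HKX]. rewrite Rpower_mult.
  unfold Dg. fold c.
  set (g := alpha * (1 - theta) / q * r).
  assert (Hg : 0 <= g).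
  { unfold g. assert (0 <= alpha * (1 - theta) / q) by (apply Rlt_le, Rdiv_lt_0_compat; nra). nra. }
  assert (Hbr : 0 <= alpha / q * r) by (assert (0 <= alpha / q) by (apply Rlt_le, Rdiv_lt_0_compat; lra); nra).
  assert (KEY : Rpower (Pg N0 (S k)) g * Rpower (Pg N0 k) (- (alpha / q) * r)
                <= Rpower (1 + 2 * N0) (alpha / q * r) * Rpower (Pg N0 (S (S k))) FR).
  { unfold Rpower. rewrite <- !exp_plus. apply exp_le_mono.
    assert (Hb1 := Pg_ge1 N0 k ltac:(lra)). assert (Hb2 := Pg_ge1 N0 (S k) ltac:(lra)).
    assert (Hb3 := Pg_ge1 N0 (S (S k)) ltac:(lra)).
    assert (L1 : ln (Pg N0 (S k)) <= ln (Pg N0 (S (S k)))).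
    { apply ln_le_mono; [lra|]. unfold Pg; rewrite !S_INR; nra. }
    assert (L2 : ln (Pg N0 (S (S k))) <= ln (1 + 2 * N0) + ln (Pg N0 k)).
    { rewrite <- ln_mult by lra. apply ln_le_mono; [lra|]. unfold Pg; rewrite !S_INR.
      assert (0 <= INR k) by apply pos_INR. nra. }
    assert (HFg : FR = g - alpha / q * r) by (unfold FR, g; field; lra).
    rewrite HFg.
    assert (0 <= g * (ln (Pg N0 (S (S k))) - ln (Pg N0 (S k)))) by nra.
    assert (0 <= alpha / q * r * (ln (1 + 2 * N0) + ln (Pg N0 k) - ln (Pg N0 (S (S k))))) by nra.
    nra. }
  unfold C3. fold c.
  replace (exp (2 * c * N0)) with (/ exp (- (2 * c * N0))) by (rewrite exp_Ropp, Rinv_inv; reflexivity).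
  pose proof (Rpower_pos (xg N0 k) c). pose proof (rpow_nonneg (K X) r).
  pose proof (exp_pos (- (2 * c * N0))).
  set (E2 := exp (- (2 * c * N0))) in *.
  set (W := Rpower (xg N0 k) c) in *.
  set (Z := rpow (K X) r) in *.
  replace (Rpower (1 + 2 * N0) (alpha / q * r) * / E2 / (1 - exp (- N0)) *
           (W * E2 * Rpower (Pg N0 (S (S k))) FR * Z * (1 - exp (- N0))))
    with (W * Z * (Rpower (1 + 2 * N0) (alpha / q * r) * Rpower (Pg N0 (S (S k))) FR)) by (field; lra).
  replace (W * Rpower (Pg N0 (S k)) g * (Rpower (Pg N0 k) (- (alpha / q) * r) * Z))
    with (W * Z * (Rpower (Pg N0 (S k)) g * Rpower (Pg N0 k) (- (alpha / q) * r))) by ring.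
  change (rpow (K (xg N0 (S k))) r) with Z.
  replace (W * Rpower (Pg N0 (S k)) g * (Rpower (Pg N0 k) (- (alpha / q) * r) * Z))
    with (W * Z * (Rpower (Pg N0 (S k)) g * Rpower (Pg N0 k) (- (alpha / q) * r))) by ring.
  apply Rmult_le_compat_l; [nra| exact KEY].
Qed.

Lemma rhs_sum q alpha theta r N0 K : 0 < N0 -> 1 < q -> 0 < alpha -> 0 < theta < 1 -> 1 <= r ->
  (forall t, 0 < t < 1 -> 0 <= K t) ->
  (forall s t, 0 < s -> s <= t -> t < 1 -> K t <= K s) ->
  forall n (pr : Riemann_integrable (rhs_integrand q alpha theta r K) (xg N0 (S (S n))) (xg N0 1)),
  sumk (fun k => Dg q alpha theta r N0 k * ag q alpha r N0 K k) (S n) <= C3 q alpha theta r N0 * RiemannInt pr.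
Proof.
  intros HN Hq Ha Hth Hr HK0 HKd. induction n; intros pr.
  - simpl sumk. rewrite Rplus_0_l. apply rhs_block; auto.
  - change (sumk (fun k => Dg q alpha theta r N0 k * ag q alpha r N0 K k) (S (S n))) with
      (sumk (fun k => Dg q alpha theta r N0 k * ag q alpha r N0 K k) (S n)
       + Dg q alpha theta r N0 (S n) * ag q alpha r N0 K (S n)).
    assert (Hc : xg N0 (S (S (S n))) <= xg N0 (S (S n)) <= xg N0 1).
    { split; apply xg_anti; lia || lra. }
    set (pr1 := RiemannInt_P22 pr Hc). set (pr2 := RiemannInt_P23 pr Hc).
    rewrite <- (RiemannInt_P26 pr1 pr2 pr). rewrite Rmult_plus_distr_l, Rplus_comm.
    apply Rplus_le_compat; [apply rhs_block; auto| apply IHn].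
Qed.

Definition N0of q alpha theta r :=
  ((alpha * (1 - theta) / q * r + 1) * ln 2) / ((1 - theta) * r) + 1.

Lemma N0of_pos q alpha theta r : 1 < q -> 0 < alpha -> 0 < theta < 1 -> 1 <= r -> 0 < N0of q alpha theta r.
Proof.
  intros. unfold N0of. assert (0 < (1 - theta) * r) by nra.
  assert (0 <= alpha * (1 - theta) / q * r).
  { assert (0 <= alpha * (1 - theta) / q) by (apply Rlt_le, Rdiv_lt_0_compat; nra). nra. }
  assert (Hl2 := ln_lt_2).
  assert (0 <= (alpha * (1 - theta) / q * r + 1) * ln 2 / ((1 - theta) * r)).
  { apply Rlt_le, Rdiv_lt_0_compat; nra. }
  lra.
Qed.

Lemma dir1 q alpha theta r K M : 1 < q -> 0 < alpha -> 0 < theta < 1 -> 1 <= r ->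
  (forall t, 0 < t < 1 -> 0 <= K t) ->
  (forall s t, 0 < s -> s <= t -> t < 1 -> K t <= K s) ->
  int01_le (rhs_integrand q alpha theta r K) M ->
  int01_le (lhs_integrand q alpha theta r K)
    (exp (N0of q alpha theta r) * (2 * C3 q alpha theta r (N0of q alpha theta r)) * M).
Proof.
  intros Hq Ha Hth Hr HK0 HKd HR a b pr Ha0 Hab Hb1.
  set (N0 := N0of q alpha theta r).
  assert (HN : 0 < N0) by (apply N0of_pos; auto).
  assert (Hbq : 0 <= alpha / q) by (apply Rlt_le, Rdiv_lt_0_compat; lra).
  assert (Hcc : 0 < (1 - theta) * r) by nra.
  assert (Hg : 0 <= alpha * (1 - theta) / q * r).
  { assert (0 <= alpha * (1 - theta) / q) by (apply Rlt_le, Rdiv_lt_0_compat; nra). nra. }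
  assert (HNc : (alpha * (1 - theta) / q * r + 1) * ln 2 <= (1 - theta) * r * N0).
  { unfold N0, N0of.
    replace ((1 - theta) * r * ((alpha * (1 - theta) / q * r + 1) * ln 2 / ((1 - theta) * r) + 1))
      with ((alpha * (1 - theta) / q * r + 1) * ln 2 + (1 - theta) * r) by (field; lra).
    lra. }
  destruct (INR_unbounded (- ln a / N0)) as [n Hn].
  assert (Hxn : xg N0 (S n) <= a).
  { unfold xg. rewrite <- (exp_ln a) by lra. apply exp_le_mono. rewrite S_INR.
    assert (N0 * INR n >= - ln a).
    { apply Rle_ge. apply (Rmult_le_reg_r (/ N0)); [apply Rinv_0_lt_compat; lra|].
      replace (N0 * INR n * / N0) with (INR n) by (field; lra). unfold Rdiv in Hn; lra. }
    nra. }
  assert (HC3 : 0 <= C3 q alpha theta r N0).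
  { unfold C3. assert (exp (- N0) < 1) by (rewrite <- exp_0; apply exp_increasing; lra).
    apply Rlt_le, Rdiv_lt_0_compat; [apply Rmult_lt_0_compat; [apply Rpower_pos| apply exp_pos]| lra]. }
  assert (Hx1 : xg N0 1 < 1) by (rewrite <- (xg_0 N0); apply xg_lt; auto).
  assert (Hx2 : 0 < xg N0 (S (S n))) by apply xg_pos.
  assert (Hx21 : xg N0 (S (S n)) <= xg N0 1) by (apply xg_anti; lia || lra).
  assert (prR := rhs_integ q alpha theta r K (xg N0 (S (S n))) (xg N0 1) Hx2 Hx21 Hx1 ltac:(lra) HK0 HKd).
  assert (HRM : RiemannInt prR <= M) by (apply HR; auto).
  assert (HS := rhs_sum q alpha theta r N0 K HN Hq Ha Hth Hr HK0 HKd n prR).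
  assert (HH := hardy (Dg q alpha theta r N0) (ag q alpha r N0 K) (Dg_nonneg q alpha theta r N0)
                  (fun k => rpow_nonneg _ _) (fun k => Dg_ratio q alpha theta r N0 k HN Hcc Hg HNc) n).
  assert (HDT : 0 <= Dg q alpha theta r N0 n * sumk (ag q alpha r N0 K) (S n)).
  { apply Rmult_le_pos; [apply Dg_nonneg| apply sumk_nonneg; intros; apply rpow_nonneg]. }
  assert (HB := lhs_blocks q alpha theta r N0 K HN Hq Ha Hth Hr HK0 HKd n a b pr Hxn Hab Hb1).
  unfold Tg in HB.
  apply Rle_trans with (1 := HB).
  rewrite Rmult_assoc. apply Rmult_le_compat_l; [left; apply exp_pos|].
  apply Rle_trans with (2 * sumk (fun k => Dg q alpha theta r N0 k * ag q alpha r N0 K k) (S n)).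
  { apply Rle_trans with (2 := HH). rewrite <- (Rplus_0_r (sumk _ (S n))) at 1.
    apply Rplus_le_compat_l; exact HDT. }
  rewrite Rmult_assoc. apply Rmult_le_compat_l; [lra|].
  apply Rle_trans with (1 := HS). apply Rmult_le_compat_l; auto.
Qed.
From Coquelicot Require Import Coquelicot.
Open Scope R_scope.

Lemma dir2 q alpha theta r K M : 1 < q -> 0 < alpha -> 0 < theta < 1 -> 1 <= r ->
  (forall t, 0 < t < 1 -> 0 <= K t) ->
  (forall s t, 0 < s -> s <= t -> t < 1 -> K t <= K s) ->
  int01_le (lhs_integrand q alpha theta r K) M ->
  int01_le (rhs_integrand q alpha theta r K)
    (2 / (Rpower (/ 2) ((1 - theta) * r - 1) * Rpower (1 + ln 2) (- (alpha * theta / q) * r)) * M).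
Proof.
  intros Hq Ha Hth Hr HK0 HKd HL a b pr Ha0 Hab Hb1.
  assert (Hbq : 0 <= alpha / q) by (apply Rlt_le, Rdiv_lt_0_compat; lra).
  set (kap := Rpower (/ 2) ((1 - theta) * r - 1) * Rpower (1 + ln 2) (- (alpha * theta / q) * r)).
  assert (Hk : 0 < kap) by (unfold kap; apply Rmult_lt_0_compat; apply Rpower_pos).
  set (f := lhs_integrand q alpha theta r K).
  assert (prL : Riemann_integrable f (/ 2 * a + 0) (/ 2 * b + 0)).
  { apply lhs_integ; auto; lra. }
  assert (Hex := ex_RInt_comp_lin f (/ 2) 0 a b (ex_RInt_Reals_1 _ _ _ prL)).
  set (prG := ex_RInt_Reals_0 _ _ _ Hex).
  assert (HG : RiemannInt prG <= M).
  { rewrite <- RInt_Reals. apply Rle_trans with (RiemannInt prL); [| apply HL; lra].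
    right. rewrite <- (RInt_Reals _ _ _ prL).
    exact (RInt_comp_lin f (/ 2) 0 a b (ex_RInt_Reals_1 _ _ _ prL)). }
  set (prS := Riemann_integrable_scal _ _ _ (2 / kap) prG).
  apply Rle_trans with (RiemannInt prS).
  - apply RiemannInt_P19; auto. intros t Ht.
    assert (H := dir2_pt q alpha theta r K t Hq Ha Hth Hr HK0 HKd ltac:(lra)).
    fold kap in H. change (scal (/ 2) (f (/ 2 * t + 0))) with (/ 2 * (f (/ 2 * t + 0))).
    rewrite Rplus_0_r. unfold f.
    apply (Rmult_le_reg_l kap); auto.
    replace (kap * (2 / kap * (/ 2 * lhs_integrand q alpha theta r K (/ 2 * t))))
      with (lhs_integrand q alpha theta r K (/ 2 * t)) by (field; lra).
    exact H.
  - unfold prS. rewrite RiemannInt_scal with (pr_f := prG).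
    fold kap. apply Rmult_le_compat_l; auto.
    apply Rlt_le, Rdiv_lt_0_compat; lra.
Qed.

Lemma int01_mono f m1 m2 : int01_le f m1 -> m1 <= m2 -> int01_le f m2.
Proof. intros H Hm a b pr Ha Hab Hb. apply Rle_trans with m1; auto. Qed.

Lemma int01_nonneg f M : int01_le f M -> 0 <= M.
Proof.
  intros H. assert (Hp := H (/2) (/2) (RiemannInt_P7 f (/2)) ltac:(lra) ltac:(lra) ltac:(lra)).
  rewrite RiemannInt_P9 in Hp. exact Hp.
Qed.

Theorem proposition3p1 (q alpha theta r : R) :
  1 < q -> 0 < alpha -> 0 < theta < 1 -> 1 <= r ->
  exists c : R, 0 < c /\
    forall K : R -> R,
      (forall t, 0 < t < 1 -> 0 <= K t) ->
      (forall s t, 0 < s -> s <= t -> t < 1 -> K t <= K s) ->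
      forall M : R,
        (int01_le (rhs_integrand q alpha theta r K) M ->
         int01_le (lhs_integrand q alpha theta r K) (c * M)) /\
        (int01_le (lhs_integrand q alpha theta r K) M ->
         int01_le (rhs_integrand q alpha theta r K) (c * M)).
Proof.
  intros Hq Ha Hth Hr.
  set (c1 := exp (N0of q alpha theta r) * (2 * C3 q alpha theta r (N0of q alpha theta r))).
  set (c2 := 2 / (Rpower (/ 2) ((1 - theta) * r - 1) * Rpower (1 + ln 2) (- (alpha * theta / q) * r))).
  assert (Hc2 : 0 < c2).
  { unfold c2. apply Rdiv_lt_0_compat; [lra| apply Rmult_lt_0_compat; apply Rpower_pos]. }
  exists (Rmax c1 c2). split.
  { apply Rlt_le_trans with c2; auto. apply Rmax_r. }
  intros K HK0 HKd M. split; intros HM; assert (HM0 := int01_nonneg _ _ HM).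
  - apply int01_mono with (c1 * M).
    + apply dir1; auto.
    + apply Rmult_le_compat_r; auto. apply Rmax_l.
  - apply int01_mono with (c2 * M).
    + apply dir2; auto.
    + apply Rmult_le_compat_r; auto. apply Rmax_r.
Qed.
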